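(* With $\mathcal{F}$ the weaved flag of type $(m_1,\dots,m_2-m_1,m_2,\dots,m_k,\dots,n-m_k)$, let $\beta\in\mathbb{F}_{q^n}^\ast\setminus\mathbb{F}_{q^{m_1}}^\ast$ satisfy $\langle\beta\rangle\cap\mathbb{F}_{q^{m_1}}^\ast=\langle\beta\rangle\cap\mathbb{F}_{q^{m_k}}^\ast$. If $L_{k+1}=n/m_k\le3$, then $\mathrm{Orb}_\beta(\mathcal{F})$ is an optimum distance flag code.
   Context: $q$ prime power; $m_1<\dots<m_k<m_{k+1}=n$ with $m_i\mid m_{i+1}$; $L_i=m_i/m_{i-1}$ for $2\le i\le k+1$; $\alpha$ primitive in $\mathbb{F}_{q^n}$; $\alpha_i=\alpha^{(q^n-1)/(q^{m_i}-1)}$; $\mathcal{F}^i_j=\bigoplus_{t=0}^{j-1}\mathbb{F}_{q^{m_i}}\alpha_{i+1}^t$ ($\mathbb{F}_q$-subspaces of $\mathbb{F}_{q^n}$) for $1\le i\le k$, $1\le j\le L_{i+1}-1$, and $\mathcal{F}=(\mathcal{F}^1_1,\dots,\mathcal{F}^1_{L_2-1},\dots,\mathcal{F}^k_1,\dots,\mathcal{F}^k_{L_{k+1}-1})$. $d_S(\mathcal{U},\mathcal{V})=\dim(\mathcal{U}+\mathcal{V})-\dim(\mathcal{U}\cap\mathcal{V})$; $d_f$ is the sum of $d_S$ over positions; $\mathrm{Orb}_\beta(\mathcal{F})=\{\mathcal{F}\beta^j:j\ge0\}$ with $\mathcal{F}\beta^j$ obtained by multiplying each subspace by $\beta^j$.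 A flag code of type $(t_1,\dots,t_r)$ on $\mathbb{F}_{q^n}$ is an optimum distance flag code if its minimum distance (minimum $d_f$ between distinct codewords) equals $2(\sum_{t_i\le\lfloor n/2\rfloor}t_i+\sum_{t_i>\lfloor n/2\rfloor}(n-t_i))$. *)

(* Defs.v *)
From HB Require Import structures.
From mathcomp Require Import all_boot all_order all_algebra all_field.
Set Implicit Arguments. Unset Strict Implicit. Unset Printing Implicit Defensive.
Import GRing.Theory.

(* Setting: F is the finite field F_q (q := #|F|), L : fieldExtType F is
   F_{q^n} with n := \dim {:L}; F_q-subspaces of F_{q^n} are {vspace L}. *)
Section FlagDefs.
Variables (F : finFieldType) (L : fieldExtType F).

Definition dS (U V : {vspace L}) : nat := (\dim (U + V)%VS - \dim (U :&: V)%VS)%N.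

Definition df (A B : seq {vspace L}) : nat := (\sum_(p <- zip A B) dS p.1 p.2)%N.

Definition is_flag_of_type (A : seq {vspace L}) (t : seq nat) : Prop :=
  [seq \dim U | U <- A] = t /\ sorted ltn t /\ all (fun d => 0 < d < \dim {:L})%N t /\
  (forall i, i.+1 < size A -> (nth 0%VS A i <= nth 0%VS A i.+1)%VS)%N.

Definition flag_bound (t : seq nat) : nat :=
  let n := \dim {:L} in
  (2 * \sum_(d <- t) (if d <= n./2 then d else n - d))%N.

Definition min_distance_is (C : seq {vspace L} -> Prop) (d : nat) : Prop :=
  (exists A B, C A /\ C B /\ A <> B /\ df A B = d) /\
  (forall A B, C A -> C B -> A <> B -> (d <= df A B)%N).

Definition optimum_distance_flag_code (C : seq {vspace L} -> Prop) (t : seq nat) : Prop :=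
  (forall A, C A -> is_flag_of_type A t) /\ min_distance_is C (flag_bound t).

(* the weaved flag: K i plays F_{q^{m_i}}, alpha primitive in L;
   alpha_{i+1} = alpha^((q^n-1)/(q^{m_{i+1}}-1));
   F^i_j = sum_{t<j} F_{q^{m_i}} alpha_{i+1}^t, for 1<=i<=k, 1<=j<=L_{i+1}-1 *)
Definition alpha_i (alpha : L) (m : nat -> nat) (i : nat) : L :=
  alpha ^+ ((#|F| ^ \dim {:L} - 1) %/ (#|F| ^ m i - 1)).

Definition weaved_flag (K : nat -> {vspace L}) (m : nat -> nat) (k : nat) (alpha : L)
  : seq {vspace L} :=
  flatten [seq [seq (\sum_(t < j) (K i * <[alpha_i alpha m i.+1 ^+ t]>))%VS
               | j <- iota 1 (m i.+1 %/ m i - 1)]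
          | i <- iota 1 k].

Definition orbit_flag (beta : L) (A : seq {vspace L}) : seq {vspace L} -> Prop :=
  fun C => exists j : nat, C = [seq (U * <[beta ^+ j]>)%VS | U <- A].

End FlagDefs.

(* Main.v *)
Require Import Defs.
From HB Require Import structures.
From mathcomp Require Import all_boot all_order all_algebra all_field.
From mathcomp Require Import zify.
Import GRing.Theory.
Set Implicit Arguments. Unset Strict Implicit. Unset Printing Implicit Defensive.

Lemma dvd_pred_exp a c : (a - 1 %| a ^ c - 1)%N.
Proof.
case: a => [|a].
  by case: c => [|c] //; rewrite exp0n.
rewrite subn1 /=. have h: (1 <= a.+1 ^ c)%N by rewrite expn_gt0.
rewrite -eqn_mod_dvd // -modnXm.
have -> : (a.+1 %% a = 1 %% a)%N by rewrite -addn1 modnDl.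
by rewrite modnXm exp1n.
Qed.

Lemma dvd_pred_exp2 q m n : (m %| n)%N -> (q ^ m - 1 %| q ^ n - 1)%N.
Proof. by case/dvdnP=> c ->; rewrite mulnC expnM dvd_pred_exp. Qed.

Section H.
Variables (F : finFieldType) (L : fieldExtType F).
Local Notation q := #|F|.

Lemma q_gt1 : (1 < q)%N. Proof. exact: finNzRing_gt1. Qed.

Lemma iter_powX (x : L) a c : (x ^+ a = x -> x ^+ (a ^ c) = x)%R.
Proof.
move=> h; elim: c => [|c IH]; first by rewrite expn0 expr1.
by rewrite expnSr exprM IH h.
Qed.

Lemma subfieldS (K1 K2 : {subfield L}) : (\dim K1 %| \dim K2)%N -> (K1 <= K2)%VS.
Proof.
case/dvdnP=> c Hc; apply/subvP=> x; rewrite !Fermat's_little_theorem => /eqP h.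
by rewrite Hc mulnC expnM iter_powX.
Qed.

End H.
Section P.
Variables (F : finFieldType) (L : fieldExtType F).
Local Notation q := #|F|.
Local Notation n := (\dim {:L}).
Variable alpha : L.
Hypothesis prim : ((q ^ n - 1)%N.-primitive_root alpha)%R.

Lemma N_gt0 : (0 < q ^ n - 1)%N.
Proof.
have h1 := q_gt1 F. have h2 : (0 < n)%N by apply: (leq_trans _ (dimvS (subvf (1%VS : {vspace L})))); rewrite dimv1.
have : (q ^ 1 <= q ^ n)%N by rewrite leq_exp2l.
rewrite expn1. lia.
Qed.

Lemma alpha_neq0 : (alpha != 0)%R.
Proof.
apply/eqP=> a0; have := prim_expr_order prim; rewrite a0 expr0n.
by have /lt0n_neq0/negPf -> := N_gt0; move/eqP; rewrite eq_sym oner_eq0.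
Qed.

Lemma alphai_mem (K : {subfield L}) :
  (\dim K %| n)%N -> (alpha ^+ ((q ^ n - 1) %/ (q ^ \dim K - 1)) \in K)%R.
Proof.
move=> hd; rewrite Fermat's_little_theorem.
set d := (q ^ \dim K - 1)%N; set e := ((q ^ n - 1) %/ d)%N.
have hN : (e * d = q ^ n - 1)%N by rewrite divnK // dvd_pred_exp2.
have h0 : (0 < q ^ \dim K)%N by rewrite expn_gt0 (ltnW (q_gt1 F)).
have -> : (q ^ \dim K = d.+1)%N by rewrite /d; lia.
rewrite -exprM (_ : (_ * _)%N = e + (q ^ n - 1))%N; last by rewrite -hN; lia.
by rewrite exprD (prim_expr_order prim) mulr1.
Qed.

Lemma adjoin_dim (K : {subfield L}) m' :
  (m' %| n)%N -> (m' <= \dim <<K; alpha ^+ ((q ^ n - 1) %/ (q ^ m' - 1))>>%VS)%N.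
Proof.
move=> hd.
set d := (q ^ m' - 1)%N; set e := ((q ^ n - 1) %/ d)%N; set a := (alpha ^+ e)%R.
have hN : (e * d = q ^ n - 1)%N by rewrite divnK // dvd_pred_exp2.
have e0 : (0 < e)%N by have := N_gt0; rewrite -hN muln_gt0 => /andP[].
have ha : a \in <<K; a>>%AS by exact: memv_adjoin.
set D := \dim <<K; a>>%AS.
have D0 : (0 < D)%N by exact: adim_gt0.
move: ha; rewrite Fermat's_little_theorem -/D.
have hq := q_gt1 F.
have qD : (1 < q ^ D)%N by rewrite -{1}(expn0 q) ltn_exp2l.
have -> : (q ^ D = (q ^ D - 1).+1)%N by lia.
rewrite exprS => /eqP h.
have a0 : (a != 0)%R by rewrite expf_neq0 // alpha_neq0.
have h1 : (a ^+ (q ^ D - 1) = 1)%R.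
  by apply: (mulfI a0); rewrite h mulr1.
move: h1; rewrite -exprM => /eqP; rewrite -(prim_order_dvd prim) -hN dvdn_pmul2l //.
move=> /dvdn_leq; rewrite subn_gt0 => /(_ qD) hle.
have : (q ^ m' <= q ^ D)%N.
  have h0 : (0 < q ^ m')%N by rewrite expn_gt0 (ltnW hq).
  rewrite /d in hle; lia.
by rewrite leq_exp2l.
Qed.

End P.

Section S.
Variables (F : finFieldType) (L : fieldExtType F).

Lemma dim_add_le (U V : {vspace L}) : (\dim (U + V) <= \dim U + \dim V)%N.
Proof. have := dimv_sum_cap U V; lia. Qed.

Variables (K : {subfield L}) (x : L).
Hypothesis x0 : (x != 0)%R.
Let S j := (\sum_(t < j) (K * <[x ^+ t]>))%VS.

Lemma S_step j : S j.+1 = (S j + K * <[x ^+ j]>)%VS.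
Proof. by rewrite /S big_ord_recr. Qed.

Lemma S_add j c : (\dim (S (j + c)) <= \dim (S j) + c * \dim K)%N.
Proof.
elim: c => [|c IH]; first by rewrite addn0 mul0n addn0.
rewrite addnS S_step; apply: (leq_trans (dim_add_le _ _)).
rewrite dim_cosetv ?expf_neq0 // mulSn [X in (X <= _)%N]addnC addnCA leq_add2l; exact: IH.
Qed.

Lemma S_dim j : (j <= adjoin_degree K x)%N -> \dim (S j) = (j * \dim K)%N.
Proof.
move=> hj; apply/eqP; rewrite eqn_leq; apply/andP; split.
  have := S_add 0 j; rewrite add0n /S big_ord0 dimv0 //.
have full : \dim (S (adjoin_degree K x)) = (adjoin_degree K x * \dim K)%N.
  by rewrite -dim_Fadjoin Fadjoin_eq_sum.
have := S_add j (adjoin_degree K x - j); rewrite subnKC // full.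
move=> h; rewrite -(leq_add2r ((adjoin_degree K x - j) * \dim K)).
by rewrite -mulnDl subnKC.
Qed.

End S.

Section C.
Variables (F : finFieldType) (L : fieldExtType F).

Lemma mem_div (W : {subfield L}) u v : u \in W -> v \in W -> (u / v)%R \in W.
Proof. by move=> hu hv; rewrite memvM // memvV. Qed.

Lemma cap_coset0 (W : {subfield L}) (U : {vspace L}) x y :
  (x != 0)%R -> (y != 0)%R -> (U <= W)%VS -> (y / x)%R \notin W ->
  (U * <[x]> :&: U * <[y]>)%VS = 0%VS.
Proof.
move=> x0 y0 sUW nW; apply/eqP; rewrite -subv0; apply/subvP=> z.
rewrite memv_cap memv0 => /andP[/memv_cosetP[u1 Hu1 ->] /memv_cosetP[u2 Hu2 E]].
have [->|u10] := eqVneq u1 0%R; first by rewrite mul0r.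
have u20 : (u2 != 0)%R by apply: contraNneq (mulf_neq0 u10 x0); rewrite E => ->; rewrite mul0r.
case/negP: nW; have -> : (y / x = u1 / u2)%R.
  by apply/eqP; rewrite eqr_div // E mulrC.
by apply: mem_div; apply: (subvP sUW).
Qed.

Lemma dS_cap0 (U : {vspace L}) x y :
  (x != 0)%R -> (y != 0)%R -> (U * <[x]> :&: U * <[y]>)%VS = 0%VS ->
  dS (U * <[x]>)%VS (U * <[y]>)%VS = (2 * \dim U)%N.
Proof.
move=> x0 y0 h; rewrite /dS h dimv0 subn0.
have := dimv_sum_cap (U * <[x]>)%VS (U * <[y]>)%VS.
rewrite h dimv0 addn0 !dim_cosetv // => ->; rewrite mul2n -addnn; reflexivity.
Qed.

Lemma module_coset (K : {subfield L}) (U : {vspace L}) w :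
  (K * U <= U)%VS -> w \in K -> (w != 0)%R -> (U * <[w]>)%VS = U.
Proof.
move=> hKU hw w0; apply/eqP; rewrite eqEdim dim_cosetv // leqnn andbT.
apply: (subv_trans _ hKU); rewrite prodvC; apply: prodvSl; by rewrite -memvE.
Qed.

Lemma top_case (K : {subfield L}) (U : {vspace L}) x y :
  (K * U <= U)%VS -> (1 \in U)%R -> \dim U = (2 * \dim K)%N ->
  \dim {:L} = (3 * \dim K)%N ->
  (x != 0)%R -> (y != 0)%R -> (y / x)%R \notin K ->
  \dim (U * <[x]> + U * <[y]>)%VS = \dim {:L}.
Proof.
move=> hKU h1 hdU hn x0 y0 nK.
set V := (U * <[x]> + U * <[y]>)%VS.
have dK0 : (0 < \dim K)%N by exact: adim_gt0.
have hKV : (K * V <= V)%VS.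
  rewrite /V prodvDr; apply: addvS; rewrite prodvA; exact: prodvSl.
have hdiv := field_module_dimS hKV.
have hle : (\dim V <= \dim {:L})%N by apply: dimvS; apply: subvf.
have hge : (\dim (U * <[x]>) <= \dim V)%N by apply: dimvS; apply: addvSl.
rewrite dim_cosetv // hdU in hge.
apply/eqP; rewrite eqn_leq hle /= leqNgt; apply/negP => hlt.
have hV : \dim V = (2 * \dim K)%N.
  case/dvdnP: hdiv => c hc; rewrite hc in hge hlt *.
  rewrite hn ltn_pmul2r // in hlt; rewrite leq_pmul2r // in hge.
  by have -> : c = 2 by lia.
have eqx : (U * <[x]>)%VS = V.
  by apply/eqP; rewrite eqEdim addvSl dim_cosetv // hV hdU leqnn.
have eqy : (U * <[y]>)%VS = V.
  by apply/eqP; rewrite eqEdim addvSr dim_cosetv // hV hdU leqnn.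
set w := (y / x)%R.
have w0 : (w != 0)%R by rewrite mulf_neq0 ?invr_eq0.
have hUw : (U * <[w]>)%VS = U.
  have := congr1 (fun Z => Z * <[x^-1]>)%VS (etrans eqy (esym eqx)).
  by rewrite -!prodvA !prodv_line divff // prodv1.
have hUwi i : (U * <[w ^+ i]>)%VS = U.
  elim: i => [|i IH]; first by rewrite expr0 prodv1.
  by rewrite exprSr -prodv_line prodvA IH hUw.
have hKsub : (K <= U)%VS.
  apply: subv_trans hKU; rewrite -{1}(prodv1 K); apply: prodvSr; by rewrite -memvE.
have hadj : (<<K; w>>%VS <= U)%VS.
  rewrite Fadjoin_eq_sum; apply/subv_sumP => i _.
  rewrite -[X in (_ <= X)%VS](hUwi i); exact: prodvSl.
have hd1 := dimvS hadj; rewrite dim_Fadjoin hdU leq_pmul2r // in hd1.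
have hd2 : (adjoin_degree K w != 1)%N by rewrite adjoin_deg_eq1.
have hd3 : (0 < adjoin_degree K w)%N by [].
move/eqP: hd2 => hd2.
have key : forall D, (D <= 2 -> 0 < D -> D <> 1 -> D = 2)%N by lia.
have hdeg := key _ hd1 hd3 hd2.
have := field_dimS (subvf <<K; w>>%AS); rewrite hn.
by rewrite dim_Fadjoin hdeg dvdn_pmul2r.
Qed.

End C.

Section Seq.
Variables (T : Type) (r : rel T).

Lemma sorted_iota_map (f : nat -> T) a c :
  (forall j, (a <= j)%N -> (j.+1 < a + c)%N -> r (f j) (f j.+1)) ->
  sorted r [seq f j | j <- iota a c].
Proof.
elim: c a => [|c IH] a h //=.
case: c IH h => [|c] IH h //=.
have -> : r (f a) (f a.+1) by apply: h; lia.
by apply: (IH a.+1) => j h1 h2; apply: h; lia.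
Qed.

Lemma last_iota_map (f : nat -> T) x c :
  (0 < c)%N -> last x [seq f j | j <- iota 1 c] = f c.
Proof.
case: c => // c _; rewrite -[c.+1]addn1 iotaD map_cat cats1 last_rcons; congr f; lia.
Qed.

Lemma sorted_flag_shape (f : nat -> nat -> T) (c : nat -> nat) s k :
 (forall i, (s <= i < s + k)%N -> 0 < c i)%N ->
 (forall i j, (s <= i < s + k)%N -> (1 <= j)%N -> (j < c i)%N -> r (f i j) (f i j.+1)) ->
 (forall i, (s <= i)%N -> (i.+1 < s + k)%N -> r (f i (c i)) (f i.+1 1)) ->
 sorted r (flatten [seq [seq f i j | j <- iota 1 (c i)] | i <- iota s k]).
Proof.
elim: k s => [|k IH] s hc hin hbr //=.
have cs : (0 < c s)%N by apply: hc; lia.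
have ss : sorted r [seq f s j | j <- iota 1 (c s)].
  apply: sorted_iota_map => j h1 h2; apply: hin => //; lia.
have IH' : sorted r (flatten [seq [seq f i j | j <- iota 1 (c i)] | i <- iota s.+1 k]).
  apply: IH => [i hi|i j hi|i hi1 hi2]; [apply: hc|apply: hin|apply: hbr]; lia.
case: k IH IH' hc hin hbr => [|k] IH IH' hc hin hbr; first by rewrite /= cats0.
have cs1 : (0 < c s.+1)%N by apply: hc; lia.
move: IH' ss; rewrite /=.
case: (c s.+1) cs1 => // c1 _ /=.
case E: (iota 1 (c s)) => [|y ys]; first by move: E cs; case: (c s).
rewrite /= cat_path => /= IH' ss; rewrite cat_path ss /= cat_path IH' andbT.
have := last_iota_map (f s) (f s y) cs; rewrite E /= => ->.
by rewrite hbr //=; lia.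
Qed.

End Seq.

Section Main.
Variables (F : finFieldType) (L : fieldExtType F) (k : nat) (m : nat -> nat)
  (K : nat -> {subfield L}) (alpha : L).
Local Notation q := #|F|.
Local Notation n := (\dim {:L}).
Hypothesis hk : (1 <= k)%N.
Hypothesis hm1 : (0 < m 1)%N.
Hypothesis hm : forall i, (1 <= i <= k)%N -> (m i < m i.+1)%N /\ (m i %| m i.+1)%N.
Hypothesis hn : m k.+1 = n.
Hypothesis hK : forall i, (1 <= i <= k)%N -> \dim (K i) = m i.
Hypothesis prim : ((q ^ n - 1)%N.-primitive_root alpha)%R.

Let a i := alpha_i alpha m i.+1.
Let V i j := (\sum_(t < j) ((K i : {vspace L}) * <[a i ^+ t]>))%VS.

Lemma m_pos i : (1 <= i <= k.+1)%N -> (0 < m i)%N.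
Proof.
elim: i => // -[|i] IH h //; have := @hm i.+1; have := IH; lia.
Qed.

Lemma m_dvd i j : (1 <= i <= j)%N -> (j <= k.+1)%N -> (m i %| m j)%N.
Proof.
move=> /andP[h1 h2]; elim: j h2 => [|j IH] h2 hj; first lia.
case: (ltngtP i j.+1) h2 => // [hlt|->] _; last by rewrite dvdnn.
apply: (dvdn_trans (IH _ _)); [lia|lia|]; case: (@hm j) => //; lia.
Qed.

Lemma m_le i j : (1 <= i <= j)%N -> (j <= k.+1)%N -> (m i <= m j)%N.
Proof. by move=> h1 h2; apply: dvdn_leq (m_dvd h1 h2); apply: m_pos; lia. Qed.

Lemma m_dvdn i : (1 <= i <= k.+1)%N -> (m i %| n)%N.
Proof. by move=> h; rewrite -hn; apply: m_dvd; lia. Qed.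

Lemma Ksub i j : (1 <= i <= j)%N -> (j <= k)%N -> (K i <= K j)%VS.
Proof. by move=> h1 h2; apply: subfieldS; rewrite !hK ?m_dvd //; lia. Qed.

Lemma LmK i : (1 <= i <= k)%N -> (m i.+1 %/ m i * m i = m i.+1)%N.
Proof. by move=> h; rewrite divnK //; case: (@hm i h). Qed.

Lemma Lm_ge2 i : (1 <= i <= k)%N -> (2 <= m i.+1 %/ m i)%N.
Proof.
move=> h; have E := LmK h; have [hl _] := @hm i h.
case: (m i.+1 %/ m i)%N E => [|[|c]] // E.
  by rewrite mul0n in E; rewrite -E in hl.
by rewrite mul1n in E; rewrite E ltnn in hl.
Qed.

Lemma a_neq0 i : (a i != 0)%R.
Proof. by rewrite /a /alpha_i expf_neq0 // (alpha_neq0 prim). Qed.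

Lemma a_mem i : (1 <= i)%N -> (i < k)%N -> a i \in K i.+1.
Proof.
move=> h1 h2; have H := alphai_mem prim (K := K i.+1).
have hd : \dim (K i.+1) = m i.+1 by apply: hK; lia.
rewrite hd in H; apply: H; apply: m_dvdn; lia.
Qed.

Lemma deg_ge i : (1 <= i <= k)%N -> (m i.+1 %/ m i <= adjoin_degree (K i) (a i))%N.
Proof.
move=> h; have := adjoin_dim prim (K i) (m_dvdn (i := i.+1) _).
rewrite -/(alpha_i alpha m i.+1) -/(a i) dim_Fadjoin hK // -{1}(LmK h) leq_pmul2r.
  by apply; lia.
by apply: m_pos; lia.
Qed.

Lemma V_dim i j : (1 <= i <= k)%N -> (j <= m i.+1 %/ m i)%N -> \dim (V i j) = (j * m i)%N.
Proof.
move=> h hj; rewrite /V S_dim ?a_neq0 ?hK //.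
exact: leq_trans hj (deg_ge h).
Qed.

Lemma V_mod i j : (K i * V i j <= V i j)%VS.
Proof.
rewrite /V big_distrr /=; apply/subv_sumP => t _.
by rewrite prodvA prodv_id (sumv_sup t).
Qed.

Lemma V_sub i j : (1 <= i)%N -> (i < k)%N -> (V i j <= K i.+1)%VS.
Proof.
move=> h1 h2; apply/subv_sumP => t _; apply: prodv_sub.
  apply: Ksub; lia.
by rewrite -memvE rpredX // a_mem.
Qed.

Lemma V_one i j : (0 < j)%N -> (1 \in V i j)%R.
Proof.
move=> hj; apply: (subvP (sumv_sup (Ordinal hj) _ _)) => //=.
by rewrite expr0 prodv1 mem1v.
Qed.

Lemma V_1 i : V i 1 = K i.
Proof. by rewrite /V big_ord1 expr0 prodv1. Qed.

Lemma V_k1 : V k 1 = K k.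
Proof. exact: V_1. Qed.

Lemma V_mono i j : (V i j <= V i j.+1)%VS.
Proof. by rewrite /V big_ord_recr /= addvSl. Qed.


Let Fl := weaved_flag (fun i => (K i : {vspace L})) m k alpha.

Lemma Fl_shape : Fl = flatten [seq [seq V i j | j <- iota 1 (m i.+1 %/ m i - 1)] | i <- iota 1 k].
Proof. by []. Qed.

Lemma Fl_mem U : U \in Fl -> exists i j,
  [/\ (1 <= i <= k)%N, (1 <= j <= m i.+1 %/ m i - 1)%N & U = V i j].
Proof.
rewrite Fl_shape => /flatten_mapP[i]; rewrite mem_iota => hi /mapP[j].
by rewrite mem_iota => hj ->; exists i, j; split => //; lia.
Qed.

Let g d := if (d <= n./2)%N then d else (n - d)%N.

Hypothesis h3 : (n %/ m k <= 3)%N.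

Lemma nK : (n %/ m k * m k = n)%N.
Proof. by rewrite -hn LmK //; lia. Qed.

Lemma mk_half : (m k <= n./2)%N.
Proof.
have := nK; have := @Lm_ge2 k; rewrite hn => /(_ _) h2.
have {h2} h2 : (2 <= n %/ m k)%N by apply: h2; lia.
move: (n %/ m k)%N h2 => c hc E.
have : (2 * m k <= c * m k)%N by rewrite leq_mul2r hc orbT.
rewrite E; lia.
Qed.

Lemma comp x y U : (x != 0)%R -> (y != 0)%R -> (y / x)%R \notin K k -> U \in Fl ->
  dS (U * <[x]>)%VS (U * <[y]>)%VS = (2 * g (\dim U))%N.
Proof.
move=> x0 y0 nKk U_in; have [i [j [hi hj ->]]] := Fl_mem U_in.
have hmk := mk_half.
have [hik|hik] := ltnP i k.
  have sU : (V i j <= K k)%VS.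
    apply: (subv_trans (V_sub _ _ hik)); first lia; apply: Ksub; lia.
  rewrite (dS_cap0 x0 y0 (cap_coset0 x0 y0 sU nKk)); congr (_ * _)%N.
  have hLi := LmK hi.
  have hjm : (j * m i <= (m i.+1 %/ m i - 1) * m i)%N by rewrite leq_mul2r; lia.
  rewrite mulnBl mul1n hLi in hjm.
  have hmi : (0 < m i)%N by apply: m_pos; lia.
  have hle : (m i.+1 <= m k)%N by apply: m_le; lia.
  rewrite /g V_dim //; last by lia.
  by have -> : (j * m i <= n./2)%N by lia.
have ik : i = k by lia.
subst i.
have hL : (m k.+1 %/ m k <= 3)%N by rewrite hn.
have hj12 : j = 1 \/ j = 2 by lia.
case: hj12 => hj'; subst j.
  rewrite V_k1 (dS_cap0 x0 y0 (cap_coset0 x0 y0 (subvv _) nKk)) /g hK //.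
  by rewrite hmk.
have hL3 : (m k.+1 %/ m k = 3)%N by lia.
have n3 : n = (3 * m k)%N by rewrite -nK -hn hL3.
have hmk0 : (0 < m k)%N by apply: m_pos; lia.
have hdU : \dim (V k 2) = (2 * \dim (K k))%N by rewrite V_dim ?hK //; lia.
have hn3 : n = (3 * \dim (K k))%N by rewrite hK.
have hsum := top_case (@V_mod k 2) (@V_one k 2 isT) hdU hn3 x0 y0 nKk.
have hcap := dimv_sum_cap (V k 2 * <[x]>)%VS (V k 2 * <[y]>)%VS.
rewrite hsum !dim_cosetv // hdU hK // in hcap.
rewrite /dS hsum /g hdU hK //.
have -> : (2 * m k <= n./2)%N = false by apply/negbTE; lia.
have key : forall N C M, N = (3 * M)%N -> (N + C = 2 * M + 2 * M)%N -> (N - C = 2 * (N - 2 * M))%N by lia.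
exact: key n3 hcap.
Qed.

Lemma df_eq x y : (x != 0)%R -> (y != 0)%R -> (y / x)%R \notin K k ->
  df [seq (U * <[x]>)%VS | U <- Fl] [seq (U * <[y]>)%VS | U <- Fl] =
  flag_bound L [seq \dim U | U <- Fl].
Proof.
move=> x0 y0 nK; rewrite /df zip_map big_map /flag_bound big_map /=.
rewrite big_distrr /=; apply: eq_big_seq => U hU.
exact: comp.
Qed.


Lemma Fl_dims : [seq \dim U | U <- Fl] =
  flatten [seq [seq \dim (V i j) | j <- iota 1 (m i.+1 %/ m i - 1)] | i <- iota 1 k].
Proof.
rewrite Fl_shape map_flatten; congr flatten; rewrite -map_comp.
by apply: eq_map => i /=; rewrite -map_comp.
Qed.

Lemma Fl_sorted : sorted ltn [seq \dim U | U <- Fl].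
Proof.
rewrite Fl_dims; apply: (sorted_flag_shape (c := fun i => (m i.+1 %/ m i - 1)%N)) => //.
- by move=> i hi; have := @Lm_ge2 i; rewrite add1n in hi; lia.
- move=> i j hi hj1 hj2; rewrite add1n in hi.
  have hL := @Lm_ge2 i.
  rewrite !V_dim //; try lia.
- move=> i hi1 hi2; rewrite add1n in hi2.
  have h1 := @Lm_ge2 i; have h2 := @Lm_ge2 i.+1.
  have e1 : \dim (V i (m i.+1 %/ m i - 1)) = ((m i.+1 %/ m i - 1) * m i)%N.
    by rewrite V_dim //; lia.
  have e2 : \dim (V i.+1 1) = (1 * m i.+1)%N by rewrite V_dim //; lia.
  change (\dim (V i (m i.+1 %/ m i - 1)) < \dim (V i.+1 1))%N.
  rewrite e1 e2 mul1n mulnBl mul1n LmK; last lia.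
  have : (0 < m i)%N by apply: m_pos; lia.
  lia.
Qed.

Lemma Fl_nested : sorted (fun U W => (U <= W)%VS) Fl.
Proof.
rewrite Fl_shape; apply: (sorted_flag_shape (c := fun i => (m i.+1 %/ m i - 1)%N)) => //.
- by move=> i hi; have := @Lm_ge2 i; rewrite add1n in hi; lia.
- by move=> i j _ _ _; apply: V_mono.
- move=> i hi1 hi2; rewrite add1n in hi2.
  rewrite V_1; apply: V_sub; lia.
Qed.

Lemma Fl_range : all (fun d => (0 < d < n)%N) [seq \dim U | U <- Fl].
Proof.
rewrite all_map; apply/allP => U /Fl_mem [i [j [hi hj ->]]] /=.
have hL := LmK hi; have h2 := Lm_ge2 hi.
rewrite V_dim //; last lia.
have hmi : (0 < m i)%N by apply: m_pos; lia.
have hjm : (j * m i <= (m i.+1 %/ m i - 1) * m i)%N by rewrite leq_mul2r; lia.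
rewrite mulnBl mul1n hL in hjm.
have hle : (m i.+1 <= n)%N by rewrite -hn; apply: m_le; lia.
have : (0 < j * m i)%N by rewrite muln_gt0 hmi andbT; lia.
lia.
Qed.

Lemma flag_type x : (x != 0)%R ->
  is_flag_of_type [seq (U * <[x]>)%VS | U <- Fl] [seq \dim U | U <- Fl].
Proof.
move=> x0; split; [|split; [exact: Fl_sorted|split; [exact: Fl_range|]]].
  by rewrite -map_comp; apply: eq_map => U /=; rewrite dim_cosetv.
move=> i; rewrite size_map => hi.
rewrite (nth_map 0%VS) ?(nth_map 0%VS) //; last lia.
apply: prodvSl; move/sortedP: Fl_nested; apply; exact: hi.
Qed.

Lemma orbit_same w x : w \in K 1 -> (w != 0)%R ->
  [seq (U * <[x]>)%VS | U <- Fl] = [seq (U * <[w * x]>)%VS | U <- Fl].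
Proof.
move=> hw w0; apply/eq_in_map => U /Fl_mem [i [j [hi hj ->]]].
rewrite -prodv_line prodvA (module_coset (w := w) (@V_mod i j)) //.
apply: (subvP (@Ksub 1 i _ _)) hw; lia.
Qed.

Lemma V11_in : V 1 1 \in Fl.
Proof.
rewrite Fl_shape; apply/flatten_mapP; exists 1%N; first by rewrite mem_iota; lia.
apply: map_f; rewrite mem_iota; have := @Lm_ge2 1; lia.
Qed.

Lemma bound_pos : (0 < flag_bound L [seq \dim U | U <- Fl])%N.
Proof.
rewrite /flag_bound /= big_map (big_rem _ V11_in) /= V_1 hK; last lia.
have h1 : (m 1 <= n./2)%N by apply: leq_trans mk_half; apply: m_le; lia.
rewrite h1; lia.
Qed.

End Main.

Lemma df_refl (F : finFieldType) (L : fieldExtType F) (A : seq {vspace L}) : df A A = 0%N.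
Proof.
rewrite /df; elim: A => [|U A IH]; first by rewrite big_nil.
by rewrite /= big_cons IH /dS addvv capvv subnn.
Qed.


Lemma pow_div_mem (F : finFieldType) (L : fieldExtType F) (K1 Kk : {subfield L}) (beta : L) a b :
  (beta != 0)%R ->
  (forall x : L, (exists j : nat, x = (beta ^+ j)%R) -> (x \in K1) = (x \in Kk)) ->
  ((beta ^+ b / beta ^+ a)%R \in K1) = ((beta ^+ b / beta ^+ a)%R \in Kk).
Proof.
move=> b0 hb; have ub : beta \is a GRing.unit by rewrite unitfE.
case: (leqP a b) => hab.
  by rewrite -(exprB hab ub); apply: hb; exists (b - a)%N.
rewrite -(memvV K1) -(memvV Kk) invf_div -(exprB (ltnW hab) ub).
by apply: hb; exists (a - b)%N.
Qed.

Unset Implicit Arguments.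

Theorem mainTheorem13 (F : finFieldType) (L : fieldExtType F)
  (k : nat) (m : nat -> nat) (K : nat -> {subfield L}) (alpha beta : L) :
  (1 <= k)%N ->
  (0 < m 1)%N ->
  (forall i, (1 <= i <= k)%N -> (m i < m i.+1)%N /\ (m i %| m i.+1)%N) ->
  m k.+1 = \dim {:L} ->
  (forall i, (1 <= i <= k)%N -> \dim (K i) = m i) ->
  ((#|F| ^ \dim {:L} - 1)%N.-primitive_root alpha)%R ->
  (beta != 0)%R ->
  beta \notin (K 1 : {vspace L}) ->
  (forall x : L, (exists j : nat, x = (beta ^+ j)%R) ->
      (x \in (K 1 : {vspace L})) = (x \in (K k : {vspace L}))) ->
  (\dim {:L} %/ m k <= 3)%N ->
  let Fl := weaved_flag (fun i => (K i : {vspace L})) m k alpha in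
  optimum_distance_flag_code (orbit_flag beta Fl) [seq \dim U | U <- Fl].
Proof.
move=> hk hm1 hm hn hK prim b0 bK1 hb h3 Fl.
have FT := flag_type hk hm1 hm hn hK prim h3.
have DF := df_eq hk hm1 hm hn hK prim h3.
have OS := orbit_same hk hm1 hm hn hK prim h3.
have BP := bound_pos hk hm1 hm hn hK prim h3.
have key : forall a b, [seq (U * <[(beta ^+ a)%R]>)%VS | U <- Fl] <> [seq (U * <[(beta ^+ b)%R]>)%VS | U <- Fl] ->
    df [seq (U * <[(beta ^+ a)%R]>)%VS | U <- Fl] [seq (U * <[(beta ^+ b)%R]>)%VS | U <- Fl] =
    flag_bound L [seq \dim U | U <- Fl].
  move=> a b hne; apply: DF; rewrite ?expf_neq0 //.
  rewrite -(pow_div_mem _ _ b0 hb); apply/negP => hw; apply: hne.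
  have w0 : (beta ^+ b / beta ^+ a != 0)%R by rewrite mulf_neq0 ?invr_eq0 ?expf_neq0.
  by rewrite (OS _ (beta ^+ a)%R hw w0) divfK // expf_neq0.
split.
  by move=> A [j ->]; apply: FT; rewrite expf_neq0.
split.
  have E1 : df [seq (U * <[(beta ^+ 0)%R]>)%VS | U <- Fl] [seq (U * <[(beta ^+ 1)%R]>)%VS | U <- Fl] =
      flag_bound L [seq \dim U | U <- Fl].
    apply: DF; rewrite ?expf_neq0 //.
    have hbeta : (beta \in K 1) = (beta \in K k) by apply: hb; exists 1%N; rewrite expr1.
    by rewrite expr0 divr1 expr1 -hbeta.
  have hne : [seq (U * <[(beta ^+ 0)%R]>)%VS | U <- Fl] <> [seq (U * <[(beta ^+ 1)%R]>)%VS | U <- Fl].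
    by move=> E; have := BP; rewrite -E1 E df_refl.
  exists [seq (U * <[(beta ^+ 0)%R]>)%VS | U <- Fl], [seq (U * <[(beta ^+ 1)%R]>)%VS | U <- Fl].
  split; first exact: (ex_intro _ 0%N erefl).
  split; first exact: (ex_intro _ 1%N erefl).
  by split; [exact: hne | exact: E1].
move=> A B [a ->] [b ->] hne; by rewrite key.
Qed.
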